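(* Let $n>0$. Then $a(m)>a(n)$ for all $m>n$ if and only if the Fibonacci representation $(n)_F$ belongs to the regular language $10(100^*10)^*0^*$.
   Context: Let $(F_n)_{n\ge 0}$ be the Fibonacci numbers: $F_0=0$, $F_1=1$, $F_n=F_{n-1}+F_{n-2}$ for $n\ge 2$. Define $(a(n))_{n\ge 0}$ (OEIS A105774) by $a(0)=0$, $a(1)=1$, and for $n\ge 2$, $a(n)=F_{j+1}-a(n-F_j)$, where $j\ge 2$ is the unique index with $F_j<n\le F_{j+1}$. The Fibonacci (Zeckendorf) representation $(n)_F$ of $n\ge1$ is the unique binary string $e_1e_2\cdots e_t$ with $e_1=1$, no two consecutive $1$'s, and $n=\sum_{i=1}^t e_iF_{t-i+2}$. In the regular expression, juxtaposition is concatenation, $w^*$ denotes zero or more repetitions of $w$, and the star applies to the immediately preceding symbol or parenthesized group (so $100^*10$ denotes the strings $10\,0^k\,10$, $k\ge0$). *)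

(* Defs.v *)
From mathcomp Require Import all_boot all_order all_algebra.
Set Implicit Arguments. Unset Strict Implicit. Unset Printing Implicit Defensive.
Import Order.TTheory GRing.Theory Num.Theory.

Fixpoint fib (n : nat) : nat :=
  match n with
  | 0 => 0
  | 1 => 1
  | (m.+1 as p).+1 => fib p + fib m
  end.

(* For n >= 2: the unique j >= 2 with F_j < n <= F_{j+1}.  It is computed as
   the least j with n <= F_{j+1} (searched in 0..n, which suffices since
   n <= F_{n+1}); for n >= 2 this least j is >= 2 and satisfies F_j < n. *)
Definition fib_idx (n : nat) : nat :=
  find (fun j => n <= fib j.+1) (iota 0 n.+1).

(* A105774, with values in int (so the subtraction is the true one).
   a(0)=0, a(1)=1, a(n) = F_{j+1} - a(n - F_j) for n >= 2.
   The recursion is run with fuel n, which suffices since n - F_j < n. *)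
Fixpoint a_aux (fuel n : nat) : int :=
  match fuel with
  | 0 => 0%R
  | k.+1 =>
      if n <= 1 then (n%:Z)%R
      else let j := fib_idx n in
           ((fib j.+1)%:Z - a_aux k (n - fib j))%R
  end.

Definition a (n : nat) : int := a_aux n n.

(* Value of a binary string e_1 ... e_t : sum_i e_i F_{t-i+2}
   (0-based position i has weight F_{t-i+1}). *)
Definition fib_val (s : seq bool) : nat :=
  \sum_(i < size s) (nth false s i) * fib (size s - i).+1.

Definition zeck_rep (n : nat) (s : seq bool) : Prop :=
  [/\ head false s = true,
      (forall i, i.+1 < size s -> ~~ (nth false s i && nth false s i.+1))
    & fib_val s = n].

(* The regular language 10(100^*10)^*0^*, with 1 = true and 0 = false. *)
Definition block (k : nat) : seq bool :=
  [:: true; false] ++ nseq k false ++ [:: true; false].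

Definition in_lang (s : seq bool) : Prop :=
  exists (ks : seq nat) (m : nat),
    s = [:: true; false] ++ flatten (map block ks) ++ nseq m false.

(* Main.v *)
Require Import Defs.
From mathcomp Require Import all_boot all_order all_algebra zify.
Import Order.TTheory GRing.Theory Num.Theory.
Set Implicit Arguments. Unset Strict Implicit.

Lemma fibSS n : fib n.+2 = fib n.+1 + fib n. Proof. by []. Qed.

Lemma fib_leS n : fib n <= fib n.+1.
Proof. by case: n => [|n] //; rewrite fibSS leq_addr. Qed.

Lemma fib_mono m n : m <= n -> fib m <= fib n.
Proof.
move=> /subnK <-; elim: (n - m) => [|k IH] //.
by rewrite addSn (leq_trans IH) // fib_leS.
Qed.

Lemma fib_pos n : 0 < n -> 0 < fib n.
Proof. move=> Hn; have := fib_mono Hn; by []. Qed.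

Lemma fib_ge n : n <= fib n.+1.
Proof.
suff: n <= fib n.+1 /\ n.+1 <= fib n.+2 by case.
elim: n => [|n [IH1 IH2]] //; split => //.
rewrite fibSS; have := fib_pos (ltn0Sn n); lia.
Qed.

Lemma fib_idx_spec n : 2 <= n ->
  [/\ 2 <= fib_idx n, fib (fib_idx n) < n & n <= fib (fib_idx n).+1].
Proof.
move=> Hn; rewrite /fib_idx; set p := (fun j => n <= fib j.+1).
have Hh : has p (iota 0 n.+1).
  apply/hasP; exists n; [rewrite mem_iota; lia | exact: fib_ge].
set J := find p (iota 0 n.+1).
have HJ : J < n.+1 by rewrite -(size_iota 0 n.+1) -has_find.
have pJ : p J by have := nth_find 0 Hh; rewrite nth_iota.
have J2 : 2 <= J.
  case E: J => [|[|j]] //; rewrite E /p /= in pJ; lia.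
split => //.
have := before_find 0 (_ : J.-1 < J).
move=> /(_ ltac:(lia)); rewrite nth_iota; last lia.
rewrite /p add0n prednK; last lia.
by move/negbT; rewrite -ltnNge.
Qed.

Lemma fib_idx_eq n j : 2 <= j -> fib j < n -> n <= fib j.+1 -> fib_idx n = j.
Proof.
move=> Hj H1 H2.
have Hn : 2 <= n by have := fib_pos (ltac:(lia) : 0 < j); lia.
have [K1 K2 K3] := fib_idx_spec Hn.
case: (ltngtP (fib_idx n) j) => // H.
- have := fib_mono H; lia.
- have := fib_mono H; lia.
Qed.

Lemma a_aux_fuel k1 k2 n : n <= k1 -> n <= k2 -> a_aux k1 n = a_aux k2 n.
Proof.
elim: k1 k2 n => [|k1 IH] [|k2] n //=.
- by rewrite leqn0 => /eqP ->.
- by move=> _; rewrite leqn0 => /eqP ->.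
- case: ifP => // Hn H1 H2; congr (_ - _)%R.
  have Hn2 : 2 <= n by move/negbT: Hn; lia.
  have [? ? ?] := fib_idx_spec Hn2.
  have := fib_pos (ltac:(lia) : 0 < fib_idx n) => Hf.
  apply: IH; lia.
Qed.

Lemma a_auxS k n : a_aux k.+1 n = if n <= 1 then (n%:Z)%R
  else ((fib (fib_idx n).+1)%:Z - a_aux k (n - fib (fib_idx n)))%R.
Proof. by []. Qed.

Lemma a_rec n j : 2 <= j -> fib j < n -> n <= fib j.+1 ->
  a n = ((fib j.+1)%:Z - a (n - fib j))%R.
Proof.
move=> Hj H1 H2.
have Hf := fib_pos (ltac:(lia) : 0 < j).
have [n' En] : exists n', n = n'.+2 by exists (n - 2); lia.
rewrite /a En a_auxS -En ifF; last lia.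
rewrite (fib_idx_eq Hj H1 H2); congr (_ - _)%R.
apply: a_aux_fuel; lia.
Qed.

Lemma a0 : a 0 = 0%R. Proof. by []. Qed.
Lemma a1 : a 1 = 1%R. Proof. by []. Qed.
Lemma a2 : a 2 = 1%R. Proof. by vm_compute. Qed.

Lemma a_bounds n : 2 <= n ->
  ((fib (fib_idx n))%:Z <= a n)%R /\ (a n < (fib (fib_idx n).+1)%:Z)%R.
Proof.
elim/ltn_ind: n => n IH Hn.
have [J2 J1 J3] := fib_idx_spec Hn.
set j := fib_idx n in J1 J2 J3 *.
rewrite (a_rec J2 J1 J3).
have [i Ei] : exists i, j = i.+2 by exists (j - 2); lia.
rewrite Ei in J1 J3 *.
have F3 := fibSS i.+1.
have F1 := fib_pos (ltn0Sn i).
set r := n - fib i.+2.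
have Hr : 1 <= r <= fib i.+1 by rewrite /r; lia.
suff: (1 <= a r)%R /\ (a r <= (fib i.+1)%:Z)%R by lia.
case: (ltngtP r 1) => Hr1; first lia; last first.
  by rewrite Hr1 a1; lia.
have [K2 K1 K3] := fib_idx_spec Hr1.
have [IH1 IH2] := IH r ltac:(have := fib_pos (ltn0Sn i.+1); rewrite /r; lia) Hr1.
have Hk : fib_idx r < i.+1.
  rewrite ltnNge; apply/negP => /fib_mono; lia.
have := fib_mono Hk; have := fib_pos (ltac:(lia) : 0 < fib_idx r); lia.
Qed.

Lemma a_up i n : 3 <= i -> n <= fib i -> (a n < (fib i)%:Z)%R.
Proof.
move=> Hi Hn.
have F3 := fib_mono Hi.
case: (ltngtP n 1) => Hn1.
- have -> : n = 0 by lia. rewrite a0; simpl in F3; lia.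
- have [K2 K1 K3] := fib_idx_spec Hn1.
  have [_ B] := a_bounds Hn1.
  have Hk : fib_idx n < i by rewrite ltnNge; apply/negP => /fib_mono; lia.
  have := fib_mono Hk; lia.
- rewrite Hn1 a1; simpl in F3; lia.
Qed.

Lemma a_low i n : 2 <= i -> fib i < n -> ((fib i)%:Z <= a n)%R.
Proof.
move=> Hi Hn.
have Hn2 : 2 <= n by have := fib_pos (ltac:(lia) : 0 < i); lia.
have [K2 K1 K3] := fib_idx_spec Hn2.
have [B _] := a_bounds Hn2.
have Hk : i <= fib_idx n by rewrite leqNgt; apply/negP => /fib_mono; lia.
have := fib_mono Hk; lia.
Qed.

Lemma a_sep i n m : 3 <= i -> n <= fib i -> fib i < m -> (a n < a m)%R.
Proof.
move=> Hi H1 H2; have := a_up Hi H1; have := a_low (ltac:(lia) : 2 <= i) H2; lia.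
Qed.
Local Notation "n .+5" := (n.+4.+1) (at level 1, left associativity, format "n .+5") : nat_scope.
Local Notation "n .+6" := (n.+4.+2) (at level 1, left associativity, format "n .+6") : nat_scope.

Definition G n := forall m, n < m -> (a n < a m)%R.

Lemma G_fib q : G (fib q.+3).
Proof. move=> m Hm; exact: (a_sep (i:=q.+3)). Qed.

Lemma G_1 : ~ G 1.
Proof. by move=> H; have := H 2 isT; rewrite a1 a2. Qed.

Lemma G_4 : ~ G 4.
Proof. by move=> H; have := H 5 isT; vm_compute. Qed.

Lemma G_C1 p v : 1 <= v -> v < fib p.+2 -> 1 <= p -> ~ G (fib p.+4 + v).
Proof.
move=> Hv1 Hv Hp HG.
have F5 := fibSS p.+3; have F4 := fibSS p.+2; have F3 := fibSS p.+1.
have P1 := fib_pos (ltn0Sn p).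
have := HG (fib p.+4 + fib p.+2 + 1) ltac:(lia).
rewrite (a_rec (j:=p.+4)) //; try lia.
rewrite (a_rec (j:=p.+4) (n:=fib p.+4 + fib p.+2 + 1)) //; try lia.
have -> : fib p.+4 + v - fib p.+4 = v by lia.
have -> : fib p.+4 + fib p.+2 + 1 - fib p.+4 = fib p.+2 + 1 by lia.
have := a_up (i:=p.+2) ltac:(lia) (ltnW Hv).
have := a_low (i:=p.+2) (n:=fib p.+2 + 1) ltac:(lia) ltac:(lia).
lia.
Qed.

Lemma G_C3 p : ~ G (fib p.+5 + fib p.+3).
Proof.
move=> HG.
have F6 := fibSS p.+4; have F5 := fibSS p.+3; have F4 := fibSS p.+2.
have P1 := fib_pos (ltn0Sn p.+1); have P3 := fib_pos (ltn0Sn p.+2).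
have := HG (fib p.+5 + fib p.+3 + 1) ltac:(lia).
rewrite (a_rec (j:=p.+5)) //; try lia.
rewrite (a_rec (j:=p.+5) (n:=fib p.+5 + fib p.+3 + 1)) //; try lia.
have -> : fib p.+5 + fib p.+3 - fib p.+5 = fib p.+3 by lia.
have -> : fib p.+5 + fib p.+3 + 1 - fib p.+5 = fib p.+3 + 1 by lia.
have := a_up (i:=p.+3) (n:=fib p.+3) ltac:(lia) (leqnn _).
have := a_low (i:=p.+3) (n:=fib p.+3 + 1) ltac:(lia) ltac:(lia).
lia.
Qed.

Lemma exp2 p x : 1 <= x -> x <= fib p.+2 ->
  a (fib p.+5 + fib p.+3 + x) = ((fib p.+6)%:Z - ((fib p.+4)%:Z - a x))%R.
Proof.
move=> H1 H2.
have F6 := fibSS p.+4; have F5 := fibSS p.+3; have F4 := fibSS p.+2.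
rewrite (a_rec (j:=p.+5)) //; try lia.
have -> : fib p.+5 + fib p.+3 + x - fib p.+5 = fib p.+3 + x by lia.
rewrite (a_rec (j:=p.+3) (n:=fib p.+3 + x)) //; try lia.
by have -> : fib p.+3 + x - fib p.+3 = x by lia.
Qed.

Lemma G_main p u : 1 <= u -> u < fib p.+2 -> 1 <= p ->
  G (fib p.+5 + fib p.+3 + u) <-> G u.
Proof.
move=> Hu1 Hu Hp.
have F6 := fibSS p.+4; have F5 := fibSS p.+3; have F4 := fibSS p.+2.
split=> HG x Hx.
- case: (leqP x (fib p.+2)) => Hx2.
  + have := HG (fib p.+5 + fib p.+3 + x) ltac:(lia).
    rewrite !exp2 //; try lia.
  + apply: (a_sep (i:=p.+2)) => //; lia.
- case: (leqP x (fib p.+6)) => Hx2.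
  + have -> : x = fib p.+5 + fib p.+3 + (x - fib p.+5 - fib p.+3) by lia.
    rewrite !exp2 //; try lia.
    have := HG (x - fib p.+5 - fib p.+3) ltac:(lia); lia.
  + apply: (a_sep (i:=p.+6)) => //; lia.
Qed.

Lemma fib_val_cons b s : fib_val (b :: s) = b * fib (size s).+2 + fib_val s.
Proof. rewrite /fib_val big_ord_recl subn0; congr (_ + _).
Qed.

Definition V (s : seq bool) :=
  forall i, i.+1 < size s -> ~~ (nth false s i && nth false s i.+1).

Lemma V_tail b s : V (b :: s) -> V s.
Proof. by move=> H i Hi; exact: (H i.+1 Hi). Qed.

Lemma V_nseq k s : V (nseq k false ++ s) -> V s.
Proof. by elim: k => [|k IH] //= /V_tail. Qed.

Lemma val_nseq k s : fib_val (nseq k false ++ s) = fib_val s.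
Proof. by elim: k => [|k IH] //=; rewrite fib_val_cons mul0n add0n. Qed.

Lemma val_bound s : V s -> fib_val s < fib (size s).+2.
Proof.
move: (ltnSn (size s)); move: {2}(size s).+1 => N.
elim: N s => [|N IH] s //.
case: s => [|b t] Hs HV; first by rewrite /fib_val big_ord0.
case: b Hs HV => Hs HV; rewrite /= in Hs; last first.
  rewrite fib_val_cons mul0n add0n; change (size (false :: t)) with (size t).+1.
  have := IH t ltac:(lia) (V_tail HV); have := fib_leS (size t).+2; lia.
case: t Hs HV => [|[] u] Hs HV.
- by rewrite fib_val_cons /fib_val big_ord0.
- by have := HV 0 isT.
rewrite fib_val_cons fib_val_cons mul0n add0n mul1n.
change (size (false :: u)) with (size u).+1.
change (size [:: true, false & u]) with (size u).+2.
have := IH u ltac:(simpl in Hs; lia) (V_tail (V_tail HV)).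
have := fibSS (size u).+2; have := fibSS (size u).+1; lia.
Qed.

Lemma val_zero s : fib_val s = 0 -> s = nseq (size s) false.
Proof.
elim: s => [|b t IH]; first by [].
rewrite fib_val_cons; case: b.
  by have := fib_pos (ltn0Sn (size t).+1); lia.
by rewrite mul0n add0n => /IH {1}->.
Qed.

Lemma strip u : 0 < fib_val u ->
  exists k s', u = nseq k false ++ s' /\ head false s' = true.
Proof.
elim: u => [|b t IH]; first by rewrite /fib_val big_ord0.
case: b; first by move=> _; exists 0, (true :: t).
rewrite fib_val_cons mul0n add0n => /IH [k [s' [-> Hh]]].
by exists k.+1, s'.
Qed.

Lemma nseq_true_inj a1 b1 x y :
  nseq a1 false ++ true :: x = nseq b1 false ++ true :: y -> a1 = b1 /\ x = y.
Proof.
elim: a1 b1 => [|a1 IH] [|b1] //=; first by case.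
by case=> /IH [-> ->].
Qed.

Lemma count_lang s : in_lang s -> odd (count id s).
Proof.
move=> [ks [m ->]].
rewrite !count_cat count_nseq /= mul0n !add0n addn0.
suff -> : count id (flatten (map block ks)) = (size ks).*2 by rewrite odd_double.
elim: ks => [|k ks IH] //=.
rewrite count_cat IH /block !count_cat count_nseq /=; lia.
Qed.

Lemma lang_third u : in_lang [:: true, false, false & u] -> fib_val u = 0.
Proof.
move=> [[|k ks] [m /=]] //.
case: m => [|m] //= [->]; by rewrite -(cats0 (nseq m false)) val_nseq /fib_val big_ord0.
Qed.

Lemma lang_rec k s' : head false s' = true ->
  in_lang [:: true, false, true, false & nseq k false ++ s'] <-> in_lang s'.
Proof.
case: s' => [|b s''] //= ->; split.
- move=> [[|k0 ks] [m /=]].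
    by case: m.
  rewrite /block /= => [[]] E.
  rewrite -!catA /= in E.
  move: E => /nseq_true_inj [_ ->].
  by exists ks, m.
- move=> [ks [m E]]; exists (k :: ks), m.
  by rewrite /= E /block /= -!catA.
Qed.

Lemma mainS N s : size s <= N -> head false s = true -> V s ->
  (G (fib_val s) <-> in_lang s).
Proof.
elim: N s => [|N IH] [|b t] //= Hs Hb HV.
subst b.
case: t Hs HV => [|[] w] Hs HV.
- have -> : fib_val [:: true] = 1 by rewrite fib_val_cons /fib_val big_ord0.
  split => [/G_1 //|]. by move=> [ks [m []]].
- by have := HV 0 isT.
have HVw : V w := V_tail (V_tail HV).
have Hbw := val_bound HVw.
rewrite fib_val_cons fib_val_cons mul0n add0n mul1n.
change (size (false :: w)) with (size w).+1.
case: (posnP (fib_val w)) => Hz.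
  rewrite Hz addn0; split => _; last exact: G_fib.
  exists [::], (size w); by rewrite /= {1}(val_zero Hz).
case: w Hs HV HVw Hbw Hz => [|[] u] Hs HV HVw Hbw Hz.
- by rewrite /fib_val big_ord0 in Hz.
- case: u Hs HV HVw Hbw Hz => [|[] u'] Hs HV HVw Hbw Hz.
  + have -> : fib (size [:: true]).+3 + fib_val [:: true] = 4.
      by rewrite fib_val_cons /fib_val big_ord0.
    by split => [/G_4 //|/count_lang //].
  + by have := HV 2 isT.
  rewrite !fib_val_cons mul0n add0n mul1n in Hbw Hz |- *.
  change (size [:: true, false & u']) with (size u').+2 in Hbw.
  change (size [:: true, false & u']) with (size u').+2.
  change (size (false :: u')) with (size u').+1 in Hbw.
  change (size (false :: u')) with (size u').+1 in Hz.
  change (size (false :: u')) with (size u').+1.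
  have Hbu := val_bound (V_tail (V_tail HVw)).
  case: (posnP (fib_val u')) => Hz2.
    rewrite Hz2 addn0 (val_zero Hz2); split => [/G_C3 //|/count_lang].
    by rewrite /= count_nseq mul0n.
  have Hp : 1 <= size u' by case: (u') Hz2 => [|] //; rewrite /fib_val big_ord0.
  rewrite addnA (G_main Hz2 Hbu Hp).
  have [k [s' [Eu Hh]]] := strip Hz2.
  have HVs : V s' by apply: (V_nseq (k:=k)); rewrite -Eu; exact: V_tail (V_tail HVw).
  rewrite Eu val_nseq lang_rec // IH //.
  move: Hs; rewrite Eu /= size_cat size_nseq; lia.
- rewrite fib_val_cons mul0n add0n in Hz Hbw *.
  change (size (false :: u)) with (size u).+1 in Hbw.
  change (size (false :: u)) with (size u).+1.
  have Hp : 1 <= size u by case: (u) Hz => [|] //; rewrite /fib_val big_ord0.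
  split => [HG|/lang_third]; last lia.
  exfalso; exact: (G_C1 (p := size u) (v := fib_val u) Hz (val_bound (V_tail HVw)) Hp HG).
Qed.

Theorem theorem8 (n : nat) (s : seq bool) :
  0 < n -> zeck_rep n s ->
  ((forall m : nat, n < m -> (a n < a m)%R) <-> in_lang s).
Proof.
move=> _ [Hh HV <-].
exact: (mainS (N := size s)).
Qed.
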